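(* Suppose the common wavelength of the light sources is $\lambda=r\pi$ for some algebraic number $r>0$. Then there exists a two-way optical interference automaton (2OIA) that decides the language $L_{pal}=\{ww^R\mid w\in\{a,b\}^*\}$ (where $w^R$ is $w$ reversed) in time linear in the input length.
   Context: A two-way optical interference automaton (2OIA) is a deterministic machine with finite state set $Q$, start state $q_0$, accepting and rejecting states, finite input alphabet $\Sigma$, and tape alphabet $\Gamma=\Sigma\cup\{\text{¢},\$\}$. On input $w=w_1\cdots w_n$ the read-only tape holds ¢$w_1\cdots w_n\$$ in cells $0,1,\dots,n+1$, scanned by a two-way head. For each cell $m$ there is a monochromatic point light source at the point $(m,0)$ of the plane; all sources have the same wavelength $\lambda$ and the same initial amplitude $A_0$, and each source is at any moment either switched off or switched on with initial phase $0$ or $\pi$. A detector is located at a grid point $(j,k)$ with $j,k\in\{0,\tfrac12,1,\tfrac32,\dots,n+1\}$, pointing towards the source array; its field of vision is the cone making angle $\pi/4$ with the vertical line through it, so it sees exactly the sources at $(m,0)$ with $|m-j|\le k$. The resultant wave at the detector is $\sum A_0 r_m^{-1}e^{i(\phi_m+2\pi r_m/\lambda)}$, summed over the switched-on sources it sees, where $r_m$ is the distance from the source to the detector and $\phi_m\in\{0,\pi\}$ the source's phase; the detector outputs $\underline{1}$ if this resultant is nonzero and $\underline{0}$ otherwise. The transition function $\delta:Q\times\Gamma\times\{\underline0,\underline1\}\to Q\times\{\text{left},\text{right},\text{stay}\}\times\{\text{left},\text{right},\text{up},\text{down},\text{stay}\}\times\{\mathrm{toggle}(0),\mathrm{toggle}(\pi),-\}$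 maps (state, scanned symbol, detector output) to a new state, a move of the head by one cell, a move of the detector by one grid step (of length $1/2$), and an action on the source of the currently scanned cell: $\mathrm{toggle}(\phi)$ switches it on with phase $\phi$ if it is off and switches it off if it is on; $-$ does nothing. Initially all sources are off, the machine is in $q_0$, the head is on cell $0$, and the detector is at a prescribed initial grid position. For a given source, a maximal sequence of toggles at consecutive time steps is called non-transient if its length is odd; there is a constant $k$ such that the machine crashes if it attempts a non-transient toggle sequence on a single source for the $(k+1)$-th time. The machine accepts when it is in an accepting state with detector output $\underline0$. Its running time is the total number of moves made by the head plus the number of moves made by the detector. A 2OIA decides (recognizes) a language $L$ if it accepts every input in $L$ and rejects every input not in $L$. *)

(* Defs.v *)
From Stdlib Require Import Reals List Arith Lia ZArith Bool.
Import ListNotations.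

Inductive letter := La | Lb.
Inductive tsym := Cent | Dollar | Let (x : letter).
Inductive hmove := HL | HR | HS.
Inductive dmove := DL | DR | DU | DD | DS.
Inductive phase := Ph0 | PhPi.
Inductive action := Toggle (p : phase) | NoAct.
Inductive src := Off | On (p : phase).

(* A 2OIA. Detector coordinates are in half-units (j = J/2, k = K/2).
   det_init is the prescribed initial grid position (clamped into the grid). *)
Record OIA := {
  Q : Type;
  Q_finite : exists l : list Q, forall q, In q l;
  q0 : Q;
  is_acc : Q -> bool;
  is_rej : Q -> bool;
  acc_rej_disj : forall q, is_acc q = true -> is_rej q = false;
  delta : Q -> tsym -> bool -> Q * hmove * dmove * action;
  det_init : nat * nat;
  kcrash : nat
}.

Definition tape_at (w : list letter) (i : nat) : tsym :=
  match i with
  | 0 => Cent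
  | S i' => match nth_error w i' with Some x => Let x | None => Dollar end
  end.

Record config (M : OIA) := mkcfg {
  st : Q M;
  head : nat;
  dJ : nat;
  dK : nat;
  srcs : nat -> src;
  runlen : nat -> nat;      (* length of the current toggle run on source m *)
  ntcount : nat -> nat;     (* number of completed non-transient runs on m *)
  time : nat                (* head moves + detector moves so far *)
}.
Arguments mkcfg {M}.
Arguments st {M}. Arguments head {M}. Arguments dJ {M}. Arguments dK {M}.
Arguments srcs {M}. Arguments runlen {M}. Arguments ntcount {M}. Arguments time {M}.

(* the detector at (J/2, K/2) sees the source at (m,0) iff |m - J/2| <= K/2 *)
Definition visible (m J K : nat) : bool :=
  Nat.leb (2 * m) (J + K) && Nat.leb J (2 * m + K).

Definition phval (p : phase) : R := match p with Ph0 => 0%R | PhPi => PI end.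

Definition dist (m J K : nat) : R :=
  sqrt ((INR m - INR J / 2) ^ 2 + (INR K / 2) ^ 2)%R.

(* one real component (f = cos: real part, f = sin: imaginary part) of
   A0 r_m^{-1} e^{i(phi_m + 2 pi r_m / lambda)} *)
Definition contrib (A0 lam : R) (f : R -> R) (s : src) (m J K : nat) : R :=
  match s with
  | Off => 0%R
  | On p => if visible m J K
            then (A0 / dist m J K * f (phval p + 2 * PI * dist m J K / lam))%R
            else 0%R
  end.

Definition cells (n : nat) : list nat := seq 0 (n + 2).

Definition resultant_part (A0 lam : R) (f : R -> R) (n : nat) (s : nat -> src)
  (J K : nat) : R :=
  fold_right Rplus 0%R (map (fun m => contrib A0 lam f (s m) m J K) (cells n)).

(* a switched-on visible source at distance 0 (detector placed on it):
   infinite amplitude, counted as nonzero resultant *)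
Definition zero_hit (n : nat) (s : nat -> src) (J K : nat) : bool :=
  existsb (fun m => match s m with Off => false | On _ =>
                     Nat.eqb (2 * m) J && Nat.eqb K 0 end) (cells n).

(* detector output: true = 1 (resultant nonzero), false = 0 *)
Definition det_output (A0 lam : R) (n : nat) (s : nat -> src) (J K : nat) : bool :=
  zero_hit n s J K ||
  (if Req_dec_T (resultant_part A0 lam cos n s J K) 0%R then
     if Req_dec_T (resultant_part A0 lam sin n s J K) 0%R then false else true
   else true).

Inductive outcome := Accept (t : nat) | Reject (t : nat) | Crash | OutOfFuel.

Definition toggle (p : phase) (s : src) : src :=
  match s with Off => On p | On _ => Off end.

Definition is_move_h (h : hmove) : nat := match h with HS => 0 | _ => 1 end.
Definition is_move_d (d : dmove) : nat := match d with DS => 0 | _ => 1 end.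

(* one step; None = crash *)
Definition step (M : OIA) (A0 lam : R) (w : list letter) (c : config M)
  : option (config M) :=
  let n := length w in
  let sym := tape_at w (head c) in
  let b := det_output A0 lam n (srcs c) (dJ c) (dK c) in
  match delta M (st c) sym b with
  | (q', hm, dm, act) =>
    let toggled m := match act with Toggle _ => Nat.eqb m (head c) | NoAct => false end in
    let srcs' m := match act with
                   | Toggle p => if Nat.eqb m (head c) then toggle p (srcs c m) else srcs c m
                   | NoAct => srcs c m end in
    let runlen' m := if toggled m then S (runlen c m) else 0 in
    let ntcount' m := if toggled m then ntcount c m
                      else if Nat.odd (runlen c m) then S (ntcount c m) else ntcount c m in
    let head' := match hm with HL => pred (head c) | HR => Nat.min (S (head c)) (S n)
                               | HS => head c end in
    let J := dJ c in let K := dK c in let B := 2 * (S n) in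
    let J' := match dm with DL => pred J | DR => Nat.min (S J) B | _ => J end in
    let K' := match dm with DD => pred K | DU => Nat.min (S K) B | _ => K end in
    if existsb (fun m => Nat.ltb (kcrash M) (ntcount' m)) (cells n) then None
    else Some (mkcfg q' head' J' K' srcs' runlen' ntcount'
                     (time c + is_move_h hm + is_move_d dm))
  end.

(* halting: in an accepting or rejecting state. Pending toggle runs are closed
   (possibly causing a crash); accept iff accepting state and detector output 0. *)
Definition halt_result (M : OIA) (A0 lam : R) (w : list letter) (c : config M)
  : outcome :=
  let n := length w in
  if existsb (fun m => Nat.ltb (kcrash M)
        (if Nat.odd (runlen c m) then S (ntcount c m) else ntcount c m)) (cells n)
  then Crash
  else if is_acc M (st c) && negb (det_output A0 lam n (srcs c) (dJ c) (dK c))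
  then Accept (time c) else Reject (time c).

Fixpoint run (M : OIA) (A0 lam : R) (w : list letter) (fuel : nat) (c : config M)
  : outcome :=
  if is_acc M (st c) || is_rej M (st c) then halt_result M A0 lam w c
  else match fuel with
       | 0 => OutOfFuel
       | S f => match step M A0 lam w c with
                | None => Crash
                | Some c' => run M A0 lam w f c'
                end
       end.

Definition init_config (M : OIA) (w : list letter) : config M :=
  let B := 2 * S (length w) in
  mkcfg (q0 M) 0 (Nat.min (fst (det_init M)) B) (Nat.min (snd (det_init M)) B)
        (fun _ => Off) (fun _ => 0) (fun _ => 0) 0.

Definition accepts (M : OIA) (A0 lam : R) (w : list letter) : Prop :=
  exists fuel t, run M A0 lam w fuel (init_config M w) = Accept t.

Definition rejects (M : OIA) (A0 lam : R) (w : list letter) : Prop :=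
  exists fuel t, run M A0 lam w fuel (init_config M w) = Reject t.

Definition decides (M : OIA) (A0 lam : R) (L : list letter -> Prop) : Prop :=
  forall w, (L w -> accepts M A0 lam w) /\ (~ L w -> rejects M A0 lam w).

Definition linear_time (M : OIA) (A0 lam : R) : Prop :=
  exists a b : nat, forall w fuel t,
    (run M A0 lam w fuel (init_config M w) = Accept t \/
     run M A0 lam w fuel (init_config M w) = Reject t) ->
    t <= a * length w + b.

Definition Lpal (w : list letter) : Prop := exists u, w = u ++ rev u.

(* real algebraic number: root of a nonzero integer polynomial (Horner form) *)
Definition poly_evalZ (p : list Z) (x : R) : R :=
  fold_right (fun c acc => IZR c + x * acc)%R 0%R p.

Definition algebraic (x : R) : Prop :=
  exists p : list Z, (exists c, In c p /\ c <> 0%Z) /\ poly_evalZ p x = 0%R.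

(* Main.v *)
Require Import Defs.
From Stdlib Require Import Reals.
From Stdlib Require Import Lra Lia List Arith Bool Classical.
Import ListNotations.
Import Defs.

Definition Ssum (f : nat -> R) (N : nat) : R := fold_right Rplus 0%R (map f (seq 0 N)).

Lemma fr_plus (l : list R) a : fold_right Rplus a l = (fold_right Rplus 0 l + a)%R.
Proof. induction l; simpl; [lra|]. rewrite IHl. lra. Qed.

Lemma Ssum_S f N : Ssum f (S N) = (Ssum f N + f N)%R.
Proof. unfold Ssum. rewrite seq_S, map_app, fold_right_app. simpl. rewrite fr_plus. lra. Qed.

Lemma Ssum_shift f N : Ssum f (S N) = (f 0%nat + Ssum (fun m => f (S m)) N)%R.
Proof. unfold Ssum. simpl. rewrite <- seq_shift, map_map. reflexivity. Qed.

Lemma Ssum_ext f g N : (forall m, (m < N)%nat -> f m = g m) -> Ssum f N = Ssum g N.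
Proof. induction N; intros H; [reflexivity|]. rewrite !Ssum_S, IHN by (intros; apply H; lia).
  rewrite H by lia. reflexivity. Qed.

Lemma Ssum_plus f g N : Ssum (fun m => f m + g m)%R N = (Ssum f N + Ssum g N)%R.
Proof. induction N; [unfold Ssum; simpl; lra|]. rewrite !Ssum_S, IHN. lra. Qed.

Lemma Ssum_zero f N : (forall m, (m < N)%nat -> f m = 0%R) -> Ssum f N = 0%R.
Proof. induction N; intros H; [reflexivity|]. rewrite Ssum_S, IHN by (intros; apply H; lia).
  rewrite H by lia. lra. Qed.

Lemma Ssum_ind a c N : (a < N)%nat -> Ssum (fun m => if Nat.eqb m a then c else 0%R) N = c.
Proof. induction N; intros H; [lia|]. rewrite Ssum_S.
  destruct (Nat.eqb_spec N a).
  - subst. rewrite Ssum_zero. lra. intros m Hm. destruct (Nat.eqb_spec m a); [lia|reflexivity].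
  - rewrite IHN by lia. lra. Qed.

Lemma Ssum_rev f N : Ssum (fun m => f (N - 1 - m)%nat) N = Ssum f N.
Proof.
  revert f; induction N; intros f; [reflexivity|].
  rewrite Ssum_shift, Ssum_S. rewrite <- (IHN f).
  replace (S N - 1 - 0)%nat with N by lia.
  rewrite (Ssum_ext (fun m => f (S N - 1 - S m)%nat) (fun m => f (N - 1 - m)%nat)).
  rewrite Rplus_comm. reflexivity. intros m Hm. f_equal. lia. Qed.

Lemma Ssum_pair f J : 
  (2 * Ssum f (S J))%R = Ssum (fun m => f m + f (J - m)%nat)%R (S J).
Proof.
  rewrite Ssum_plus.
  assert (E : Ssum (fun m => f (J - m)%nat) (S J) = Ssum f (S J)).
  { rewrite <- (Ssum_rev f (S J)). apply Ssum_ext. intros m _. f_equal. lia. }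
  rewrite E. lra. Qed.

Lemma zero_hit_false n s J K : K <> 0%nat -> zero_hit n s J K = false.
Proof.
  intros HK. unfold zero_hit. destruct (existsb _ _) eqn:E; auto.
  apply existsb_exists in E. destruct E as [m [_ Hm]]. destruct (s m); [discriminate|].
  apply andb_true_iff in Hm. destruct Hm as [_ Hm]. apply Nat.eqb_eq in Hm. lia.
Qed.

Lemma out_false A0 lam n s J K : K <> 0%nat ->
  resultant_part A0 lam cos n s J K = 0%R -> resultant_part A0 lam sin n s J K = 0%R ->
  det_output A0 lam n s J K = false.
Proof.
  intros HK H1 H2. unfold det_output. rewrite zero_hit_false by exact HK. simpl.
  destruct (Req_dec_T _ 0); [|contradiction]. destruct (Req_dec_T _ 0); [|contradiction]. reflexivity.
Qed.

Lemma out_true A0 lam n s J K : K <> 0%nat ->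
  resultant_part A0 lam cos n s J K <> 0%R \/ resultant_part A0 lam sin n s J K <> 0%R ->
  det_output A0 lam n s J K = true.
Proof.
  intros HK H. unfold det_output. rewrite zero_hit_false by exact HK. simpl.
  destruct (Req_dec_T _ 0); [|reflexivity]. destruct (Req_dec_T _ 0); [|reflexivity].
  destruct H; contradiction.
Qed.

Lemma resultant_Ssum A0 lam g n s J K :
  resultant_part A0 lam g n s J K = Ssum (fun m => contrib A0 lam g (s m) m J K) (n + 2).
Proof. reflexivity. Qed.

Lemma dist_pos m J K : (1 <= K)%nat -> (0 < dist m J K)%R.
Proof.
  intros HK. unfold dist. apply sqrt_lt_R0. apply le_INR in HK. simpl in HK.
  assert (0 < (INR K / 2) ^ 2)%R by (apply pow_lt; lra). 
  assert (0 <= (INR m - INR J / 2) ^ 2)%R by (apply pow2_ge_0). lra.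
Qed.

Lemma contrib_nz A0 lam p m J K (a : R) : (0 < A0)%R -> (1 <= K)%nat -> a <> 0%R ->
  visible m J K = true ->
  (a * contrib A0 lam cos (On p) m J K <> 0)%R \/ (a * contrib A0 lam sin (On p) m J K <> 0)%R.
Proof.
  intros HA HK Ha Hv. unfold contrib. rewrite Hv.
  set (x := (phval p + 2 * PI * dist m J K / lam)%R).
  assert (Hd := dist_pos m J K HK).
  assert (Hc : (a * (A0 / dist m J K) <> 0)%R).
  { apply Rmult_integral_contrapositive. split; auto. unfold Rdiv.
    apply Rmult_integral_contrapositive. split; [lra|]. apply Rinv_neq_0_compat; lra. }
  destruct (Req_dec (cos x) 0) as [Hcx|Hcx].
  - right. assert (sin x <> 0)%R.
    { intros Hs. pose proof (sin2_cos2 x). rewrite Hcx, Hs in H. unfold Rsqr in H. lra. }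
    rewrite <- Rmult_assoc. apply Rmult_integral_contrapositive; auto.
  - left. rewrite <- Rmult_assoc. apply Rmult_integral_contrapositive; auto.
Qed.

Lemma visible_sym m J K : (m <= J)%nat -> visible (J - m) J K = visible m J K.
Proof.
  intros H. unfold visible.
  destruct (Nat.leb_spec (2 * (J - m)) (J + K)), (Nat.leb_spec J (2 * (J - m) + K)),
           (Nat.leb_spec (2 * m) (J + K)), (Nat.leb_spec J (2 * m + K)); simpl; auto; lia.
Qed.

Lemma dist_sym m J K : (m <= J)%nat -> dist (J - m) J K = dist m J K.
Proof.
  intros H. unfold dist. rewrite minus_INR by exact H. replace ((INR J - INR m - INR J / 2) ^ 2)%R with ((INR m - INR J / 2) ^ 2)%R by field. reflexivity.
Qed.

Definition fp (x : letter) : phase := match x with La => Ph0 | Lb => PhPi end.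
Definition sp (x : letter) : phase := match x with La => PhPi | Lb => Ph0 end.

Lemma contrib_opp A0 lam (g : R -> R) (Hg : forall y, (g (PI + y) = - g y)%R) x m m' J K :
  visible m J K = visible m' J K -> dist m J K = dist m' J K ->
  (contrib A0 lam g (On (fp x)) m J K + contrib A0 lam g (On (sp x)) m' J K = 0)%R.
Proof.
  intros Hv Hd. unfold contrib. rewrite <- Hv, <- Hd. destruct (visible m J K); [|lra].
  destruct x; simpl; rewrite ?Rplus_0_l, Hg; lra.
Qed.

Lemma Hcos : forall y, cos (PI + y) = (- cos y)%R.
Proof. intros y. rewrite Rplus_comm. apply neg_cos. Qed.
Lemma Hsin : forall y, sin (PI + y) = (- sin y)%R.
Proof. intros y. rewrite Rplus_comm. apply neg_sin. Qed.


Inductive st8 := S0 | Aev | Aod | Bs | Cs | Ds | Acc | Rej.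


Definition dD (s : tsym) (b : bool) : st8 * hmove * dmove * action :=
  if b then (Rej, HS, DS, NoAct) else
  match s with Dollar => (Acc, HS, DS, NoAct) | _ => (Ds, HR, DU, NoAct) end.

Definition mdelta (q : st8) (s : tsym) (b : bool) : st8 * hmove * dmove * action :=
  match q with
  | S0 => (Aev, HR, DR, NoAct)
  | Aev => match s with Let _ => (Aod, HR, DR, NoAct) | _ => (Bs, HL, DU, NoAct) end
  | Aod => match s with Let _ => (Aev, HR, DR, NoAct) | _ => (Rej, HS, DS, NoAct) end
  | Bs => match s with
          | Let x => if b then (Cs, HL, DS, Toggle (fp x)) else (Bs, HL, DS, Toggle (sp x))
          | _ => dD s b end
  | Cs => match s with Let x => (Cs, HL, DS, Toggle (fp x)) | _ => dD s b end
  | Ds => dD s b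
  | Acc => (Acc, HS, DS, NoAct)
  | Rej => (Rej, HS, DS, NoAct)
  end.

Definition isacc (q : st8) := match q with Acc => true | _ => false end.
Definition isrej (q : st8) := match q with Rej => true | _ => false end.

Lemma st8_fin : exists l : list st8, forall q, In q l.
Proof. exists [S0; Aev; Aod; Bs; Cs; Ds; Acc; Rej]; intros []; simpl; tauto. Qed.

Lemma st8_disj : forall q, isacc q = true -> isrej q = false.
Proof. intros []; simpl; congruence. Qed.

Definition M : OIA := {| Q := st8; Q_finite := st8_fin; q0 := S0; is_acc := isacc;
  is_rej := isrej; acc_rej_disj := st8_disj; delta := mdelta; det_init := (0,0);
  kcrash := 1 |}.

Definition Inv (c : config M) : Prop :=
  forall m, ntcount c m + runlen c m <= 1 /\
            (srcs c m = Off -> ntcount c m = 0 /\ runlen c m = 0).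

Lemma step_spec A0 lam w (c : config M) q' hm dm act :
  Inv c ->
  mdelta (st c) (tape_at w (head c)) (det_output A0 lam (length w) (srcs c) (dJ c) (dK c)) = (q', hm, dm, act) ->
  (forall p, act = Toggle p -> srcs c (head c) = Off) ->
  exists c', step M A0 lam w c = Some c' /\ st c' = q' /\
    head c' = match hm with HL => pred (head c) | HR => Nat.min (S (head c)) (S (length w)) | HS => head c end /\
    dJ c' = match dm with DL => pred (dJ c) | DR => Nat.min (S (dJ c)) (2 * S (length w)) | _ => dJ c end /\
    dK c' = match dm with DD => pred (dK c) | DU => Nat.min (S (dK c)) (2 * S (length w)) | _ => dK c end /\
    (forall m, srcs c' m = match act with Toggle p => if Nat.eqb m (head c) then toggle p (srcs c m) else srcs c m | NoAct => srcs c m end) /\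
    Inv c' /\ time c' = time c + is_move_h hm + is_move_d dm.
Proof.
  intros HI Hd Ht. unfold step. cbv zeta. change (delta M) with mdelta. rewrite Hd.
  set (nt := fun m => if match act with Toggle _ => Nat.eqb m (head c) | NoAct => false end
                      then ntcount c m else if Nat.odd (runlen c m) then S (ntcount c m) else ntcount c m).
  set (rl := fun m => if match act with Toggle _ => Nat.eqb m (head c) | NoAct => false end then S (runlen c m) else 0).
  set (ss := fun m => match act with Toggle p => if Nat.eqb m (head c) then toggle p (srcs c m) else srcs c m | NoAct => srcs c m end).
  assert (Hodd : forall m, (if Nat.odd (runlen c m) then S (ntcount c m) else ntcount c m) = ntcount c m + runlen c m).
  { intros m. destruct (HI m) as [H1 _]. destruct (runlen c m) as [|[|r]]; simpl; lia. }
  assert (HI' : forall m, nt m + rl m <= 1 /\ (ss m = Off -> nt m = 0 /\ rl m = 0)).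
  { intros m. unfold nt, rl, ss. destruct act as [p|].
    - destruct (Nat.eqb_spec m (head c)) as [->|Hne].
      + rewrite (Ht p eq_refl). destruct (HI (head c)) as [_ H2]. destruct (H2 (Ht p eq_refl)) as [-> ->].
        simpl. split; [lia| discriminate].
      + rewrite Hodd. destruct (HI m) as [H1 H2]. split; [lia|]. intros Hs. destruct (H2 Hs); lia.
    - rewrite Hodd. destruct (HI m) as [H1 H2]. split; [lia|]. intros Hs. destruct (H2 Hs); lia. }
  replace (existsb _ _) with false.
  2:{ symmetry. destruct (existsb _ _) eqn:E; auto. apply existsb_exists in E.
      destruct E as [m0 [_ Hm]]. simpl in Hm. apply Nat.ltb_lt in Hm. fold (nt m0) in Hm.
      destruct (HI' m0). lia. }
  eexists. split; [reflexivity|].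
  split; [reflexivity|]. split; [reflexivity|]. split; [reflexivity|]. split; [reflexivity|].
  split; [intros; reflexivity|]. split; [|reflexivity].
  intros m. exact (HI' m).
Qed.

Definition EndsA A0 lam w (c : config M) T :=
  (exists fuel t, run M A0 lam w fuel c = Accept t) /\
  (forall fuel t, run M A0 lam w fuel c = Accept t \/ run M A0 lam w fuel c = Reject t -> t <= T).
Definition EndsR A0 lam w (c : config M) T :=
  (exists fuel t, run M A0 lam w fuel c = Reject t) /\
  (forall fuel t, run M A0 lam w fuel c = Accept t \/ run M A0 lam w fuel c = Reject t -> t <= T).

Lemma run_step A0 lam w (c c' : config M) f :
  isacc (st c) || isrej (st c) = false -> step M A0 lam w c = Some c' ->
  run M A0 lam w (S f) c = run M A0 lam w f c'.
Proof. intros H1 H2. simpl. change (is_acc M) with isacc. change (is_rej M) with isrej.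
  rewrite H1, H2. reflexivity. Qed.

Lemma run_zero A0 lam w (c : config M) :
  isacc (st c) || isrej (st c) = false -> run M A0 lam w 0 c = OutOfFuel.
Proof. intros H1. simpl. change (is_acc M) with isacc. change (is_rej M) with isrej.
  rewrite H1. reflexivity. Qed.

Lemma EndsA_step A0 lam w (c c' : config M) T :
  isacc (st c) || isrej (st c) = false -> step M A0 lam w c = Some c' ->
  EndsA A0 lam w c' T -> EndsA A0 lam w c T.
Proof.
  intros H1 H2 [[f [t Hf]] Hb]. split.
  - exists (S f), t. rewrite (run_step _ _ _ _ _ _ H1 H2). exact Hf.
  - intros [|f'] t' Ht'. rewrite run_zero in Ht' by exact H1. destruct Ht'; discriminate.
    rewrite (run_step _ _ _ _ _ _ H1 H2) in Ht'. eauto.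
Qed.

Lemma EndsR_step A0 lam w (c c' : config M) T :
  isacc (st c) || isrej (st c) = false -> step M A0 lam w c = Some c' ->
  EndsR A0 lam w c' T -> EndsR A0 lam w c T.
Proof.
  intros H1 H2 [[f [t Hf]] Hb]. split.
  - exists (S f), t. rewrite (run_step _ _ _ _ _ _ H1 H2). exact Hf.
  - intros [|f'] t' Ht'. rewrite run_zero in Ht' by exact H1. destruct Ht'; discriminate.
    rewrite (run_step _ _ _ _ _ _ H1 H2) in Ht'. eauto.
Qed.

Lemma EndsA_weak A0 lam w c T T' : T <= T' -> EndsA A0 lam w c T -> EndsA A0 lam w c T'.
Proof. intros H [H1 H2]. split; auto. intros; specialize (H2 _ _ H0); lia. Qed.
Lemma EndsR_weak A0 lam w c T T' : T <= T' -> EndsR A0 lam w c T -> EndsR A0 lam w c T'.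
Proof. intros H [H1 H2]. split; auto. intros; specialize (H2 _ _ H0); lia. Qed.

Lemma nocrash (w : list letter) (c : config M) : Inv c ->
  existsb (fun m => Nat.ltb (kcrash M)
        (if Nat.odd (runlen c m) then S (ntcount c m) else ntcount c m)) (cells (length w)) = false.
Proof.
  intros HI. destruct (existsb _ _) eqn:E; auto. apply existsb_exists in E.
  destruct E as [m [_ Hm]]. simpl in Hm. apply Nat.ltb_lt in Hm. destruct (HI m) as [H1 _].
  destruct (runlen c m) as [|[|r]]; simpl in Hm; lia.
Qed.

Lemma run_halt A0 lam w (c : config M) f :
  isacc (st c) || isrej (st c) = true -> run M A0 lam w f c = halt_result M A0 lam w c.
Proof. intros H. destruct f; simpl; change (is_acc M) with isacc; change (is_rej M) with isrej;
  rewrite H; reflexivity. Qed.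

Lemma halt_A A0 lam w (c : config M) : st c = Acc -> Inv c ->
  det_output A0 lam (length w) (srcs c) (dJ c) (dK c) = false -> EndsA A0 lam w c (time c).
Proof.
  intros Hs HI Hd. assert (Hr : forall f, run M A0 lam w f c = Accept (time c)).
  { intros f. rewrite run_halt by (rewrite Hs; reflexivity). unfold halt_result.
    rewrite (nocrash w c HI). change (is_acc M) with isacc. rewrite Hs, Hd. reflexivity. }
  split. exists 0, (time c). apply Hr. intros f t. rewrite Hr. intros [H|H]; inversion H; lia.
Qed.

Lemma halt_R A0 lam w (c : config M) : st c = Rej -> Inv c -> EndsR A0 lam w c (time c).
Proof.
  intros Hs HI. assert (Hr : forall f, run M A0 lam w f c = Reject (time c)).
  { intros f. rewrite run_halt by (rewrite Hs; reflexivity). unfold halt_result.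
    rewrite (nocrash w c HI). change (is_acc M) with isacc. rewrite Hs. reflexivity. }
  split. exists 0, (time c). apply Hr. intros f t. rewrite Hr. intros [H|H]; inversion H; lia.
Qed.


Lemma pairs_zero (f : nat -> R) k :
  f 0%nat = 0%R -> f (2 * k + 1)%nat = 0%R ->
  (forall i, (1 <= i <= k)%nat -> f i + f (2 * k + 1 - i)%nat = 0)%R ->
  Ssum f (S (2 * k + 1)) = 0%R.
Proof.
  intros H0 HJ Hp. set (J := (2 * k + 1)%nat) in *.
  assert (E := Ssum_pair f J).
  rewrite (Ssum_zero (fun m => f m + f (J - m)%nat)%R) in E. lra.
  intros m Hm.
  destruct (Nat.eq_dec m 0) as [->|]. { rewrite Nat.sub_0_r. fold J in HJ. rewrite H0, HJ. lra. }
  destruct (Nat.eq_dec m J) as [->|]. { rewrite Nat.sub_diag, H0. fold J in HJ. rewrite HJ. lra. }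
  destruct (le_lt_dec m k). { apply Hp. lia. }
  replace (f m) with (f (J - (J - m))%nat) by (f_equal; lia).
  rewrite Rplus_comm. apply Hp. unfold J in *. lia.
Qed.

Lemma pairs_one (f : nat -> R) k i1 :
  f 0%nat = 0%R -> f (2 * k + 1)%nat = 0%R -> (1 <= i1 <= k)%nat ->
  (forall i, (1 <= i <= k)%nat -> i <> i1 -> f i + f (2 * k + 1 - i)%nat = 0)%R ->
  f (2 * k + 1 - i1)%nat = f i1 ->
  Ssum f (S (2 * k + 1)) = (2 * f i1)%R.
Proof.
  intros H0 HJ Hi1 Hp Heq. set (J := (2 * k + 1)%nat) in *.
  assert (E := Ssum_pair f J).
  rewrite (Ssum_ext (fun m => f m + f (J - m)%nat)%R
     (fun m => (if Nat.eqb m i1 then 2 * f i1 else 0) + (if Nat.eqb m (J - i1) then 2 * f i1 else 0))%R) in E.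
  - rewrite Ssum_plus, !Ssum_ind in E by lia. lra.
  - intros m Hm.
    destruct (Nat.eq_dec m 0) as [->|].
    { rewrite Nat.sub_0_r. fold J in HJ. rewrite H0, HJ.
      destruct (Nat.eqb_spec 0 i1); [lia|]. destruct (Nat.eqb_spec 0 (J - i1)); [lia|]. lra. }
    destruct (Nat.eq_dec m J) as [->|].
    { rewrite Nat.sub_diag, H0. fold J in HJ. rewrite HJ.
      destruct (Nat.eqb_spec J i1); [lia|]. destruct (Nat.eqb_spec J (J - i1)); [lia|]. lra. }
    destruct (le_lt_dec m k).
    + destruct (Nat.eqb_spec m (J - i1)); [lia|].
      destruct (Nat.eqb_spec m i1) as [->|]. { rewrite Heq. lra. }
      rewrite Hp by lia. lra.
    + destruct (Nat.eqb_spec m i1); [lia|].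
      replace (f m) with (f (J - (J - m))%nat) by (f_equal; lia).
      destruct (Nat.eqb_spec m (J - i1)) as [->|].
      { replace (J - (J - i1))%nat with i1 by lia. rewrite Heq. lra. }
      rewrite Rplus_comm. rewrite Hp by lia. lra.
Qed.

Definition wl (w : list letter) (m : nat) : letter := nth (m - 1) w La.

Definition srcf (w : list letter) (k h m : nat) : src :=
  if (h <? m) && (m <=? 2 * k) then On (if m <=? k then fp (wl w m) else sp (wl w m)) else Off.

Definition good (w : list letter) (k K : nat) : Prop :=
  forall i, (1 <= i <= k)%nat -> (2 * k + 1 - 2 * i <= K)%nat -> wl w i = wl w (2 * k + 1 - i).

Lemma vis_small i k K : (i <= k)%nat -> visible i (2 * k + 1) K = (2 * k + 1 - 2 * i <=? K)%nat.
Proof. intros H. unfold visible.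
  destruct (Nat.leb_spec (2 * i) (2 * k + 1 + K)), (Nat.leb_spec (2 * k + 1) (2 * i + K)),
    (Nat.leb_spec (2 * k + 1 - 2 * i) K); simpl; auto; lia. Qed.

Lemma src_lo w k i : (1 <= i <= k)%nat -> srcf w k 0 i = On (fp (wl w i)).
Proof. intros H. unfold srcf. destruct (Nat.ltb_spec 0 i); [|lia]. destruct (Nat.leb_spec i (2*k)); [|lia].
  destruct (Nat.leb_spec i k); [|lia]. reflexivity. Qed.
Lemma src_hi w k i : (k < i <= 2 * k)%nat -> srcf w k 0 i = On (sp (wl w i)).
Proof. intros H. unfold srcf. destruct (Nat.ltb_spec 0 i); [|lia]. destruct (Nat.leb_spec i (2*k)); [|lia].
  destruct (Nat.leb_spec i k); [lia|]. reflexivity. Qed.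
Lemma src_off w k h i : (i <= h \/ 2 * k < i)%nat -> srcf w k h i = Off.
Proof. intros H. unfold srcf. destruct (Nat.ltb_spec h i), (Nat.leb_spec i (2*k)); simpl; auto; lia. Qed.

Lemma sp_fp x y : x <> y -> sp y = fp x.
Proof. destruct x, y; simpl; congruence. Qed.

Lemma D_sum_zero A0 lam (g : R -> R) (Hg : forall y, (g (PI + y) = - g y)%R) w k (s : nat -> src) K :
  (forall m, s m = srcf w k 0 m) -> good w k K ->
  Ssum (fun m => contrib A0 lam g (s m) m (2 * k + 1) K) (S (2 * k + 1)) = 0%R.
Proof.
  intros Hs Hgd. apply pairs_zero.
  - rewrite Hs, src_off by lia. reflexivity.
  - rewrite Hs, src_off by lia. reflexivity.
  - intros i Hi. rewrite !Hs, src_lo, src_hi by lia.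
    destruct (visible i (2 * k + 1) K) eqn:Hv.
    + rewrite vis_small in Hv by lia. apply Nat.leb_le in Hv. rewrite <- (Hgd i Hi Hv).
      apply contrib_opp; auto. rewrite visible_sym by lia. reflexivity.
      rewrite dist_sym by lia. reflexivity.
    + unfold contrib. rewrite Hv. rewrite visible_sym by lia. rewrite Hv. lra.
Qed.

Lemma D_sum_one A0 lam (g : R -> R) (Hg : forall y, (g (PI + y) = - g y)%R) w k (s : nat -> src) K i1 :
  (forall m, s m = srcf w k 0 m) -> (1 <= i1 <= k)%nat -> (2 * k + 1 - 2 * i1 = K)%nat ->
  wl w i1 <> wl w (2 * k + 1 - i1) ->
  (forall i, (1 <= i <= k)%nat -> i <> i1 -> (2 * k + 1 - 2 * i <= K)%nat -> wl w i = wl w (2 * k + 1 - i)) ->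
  Ssum (fun m => contrib A0 lam g (s m) m (2 * k + 1) K) (S (2 * k + 1)) =
  (2 * contrib A0 lam g (On (fp (wl w i1))) i1 (2 * k + 1) K)%R.
Proof.
  intros Hs Hi1 HK Hne Hgd. rewrite (pairs_one _ k i1).
  - rewrite Hs, src_lo by lia. reflexivity.
  - rewrite Hs, src_off by lia. reflexivity.
  - rewrite Hs, src_off by lia. reflexivity.
  - exact Hi1.
  - intros i Hi Hii. rewrite !Hs, src_lo, src_hi by lia.
    destruct (visible i (2 * k + 1) K) eqn:Hv.
    + rewrite vis_small in Hv by lia. apply Nat.leb_le in Hv. rewrite <- (Hgd i Hi Hii Hv).
      apply contrib_opp; auto. rewrite visible_sym by lia. reflexivity.
      rewrite dist_sym by lia. reflexivity.
    + unfold contrib. rewrite Hv. rewrite visible_sym by lia. rewrite Hv. lra.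
  - rewrite !Hs, (src_lo w k i1), (src_hi w k (2 * k + 1 - i1)) by lia. rewrite (sp_fp _ _ Hne).
    unfold contrib. rewrite visible_sym, dist_sym by lia. reflexivity.
Qed.

Lemma D_out0 A0 lam w k (s : nat -> src) K :
  (forall m, s m = srcf w k 0 m) -> (1 <= K)%nat -> good w k K ->
  det_output A0 lam (2 * k) s (2 * k + 1) K = false.
Proof.
  intros Hs HK Hgd. apply out_false; [lia| |]; rewrite resultant_Ssum;
  replace (2 * k + 2)%nat with (S (2 * k + 1)) by lia.
  apply (D_sum_zero A0 lam cos Hcos w k s K); auto.
  apply (D_sum_zero A0 lam sin Hsin w k s K); auto.
Qed.

Lemma D_out1 A0 lam w k (s : nat -> src) K :
  (0 < A0)%R -> (forall m, s m = srcf w k 0 m) -> (1 <= K)%nat -> good w k (K - 1) -> ~ good w k K ->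
  det_output A0 lam (2 * k) s (2 * k + 1) K = true.
Proof.
  intros HA Hs HK Hg1 Hg2.
  assert (Hex : exists i1, (1 <= i1 <= k)%nat /\ (2 * k + 1 - 2 * i1 <= K)%nat /\ wl w i1 <> wl w (2 * k + 1 - i1)).
  { apply NNPP. intros Hn. apply Hg2. intros i Hi HiK.
    destruct (classic (wl w i = wl w (2 * k + 1 - i))); auto. exfalso. apply Hn. eauto. }
  destruct Hex as [i1 [Hi1 [HiK Hne]]].
  assert (HK1 : (2 * k + 1 - 2 * i1 = K)%nat).
  { destruct (Nat.eq_dec (2 * k + 1 - 2 * i1) K); auto. exfalso. apply Hne. apply Hg1; auto. lia. }
  assert (Hgd : forall i, (1 <= i <= k)%nat -> i <> i1 -> (2 * k + 1 - 2 * i <= K)%nat -> wl w i = wl w (2 * k + 1 - i)).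
  { intros i Hi Hii HiK'. apply Hg1; auto. lia. }
  apply out_true; [lia|]. rewrite !resultant_Ssum.
  replace (2 * k + 2)%nat with (S (2 * k + 1)) by lia.
  rewrite (D_sum_one A0 lam cos Hcos w k s K i1), (D_sum_one A0 lam sin Hsin w k s K i1); auto.
  apply contrib_nz; auto; try lra. rewrite vis_small by lia. apply Nat.leb_le. lia.
Qed.

Lemma B_out0 A0 lam w k h (s : nat -> src) :
  (forall m, s m = srcf w k h m) -> (k < h)%nat ->
  det_output A0 lam (2 * k) s (2 * k + 1) 1 = false.
Proof.
  intros Hs Hh. apply out_false; [lia| |]; rewrite resultant_Ssum; apply Ssum_zero; intros m Hm;
  rewrite Hs; unfold srcf;
  (destruct ((h <? m) && (m <=? 2 * k)) eqn:E; [|reflexivity]);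
  apply andb_true_iff in E; destruct E as [E _]; apply Nat.ltb_lt in E;
  unfold contrib; replace (visible m (2 * k + 1) 1) with false; auto;
  unfold visible; (destruct (Nat.leb_spec (2 * m) (2 * k + 1 + 1)); [lia|reflexivity]).
Qed.

Lemma B_out1 A0 lam w k (s : nat -> src) :
  (0 < A0)%R -> (forall m, s m = srcf w k k m) -> (1 <= k)%nat ->
  det_output A0 lam (2 * k) s (2 * k + 1) 1 = true.
Proof.
  intros HA Hs Hk.
  assert (E : forall g, Ssum (fun m => contrib A0 lam g (s m) m (2 * k + 1) 1) (2 * k + 2) =
     contrib A0 lam g (On (sp (wl w (k + 1)))) (k + 1) (2 * k + 1) 1).
  { intros g. rewrite <- (Ssum_ind (k + 1) (contrib A0 lam g (On (sp (wl w (k + 1)))) (k + 1) (2 * k + 1) 1) (2 * k + 2)) by lia.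
    apply Ssum_ext. intros m Hm. rewrite Hs. unfold srcf.
    destruct (Nat.eqb_spec m (k + 1)) as [->|Hne].
    - destruct (Nat.ltb_spec k (k + 1)); [|lia]. destruct (Nat.leb_spec (k + 1) (2 * k)); [|lia].
      destruct (Nat.leb_spec (k + 1) k); [lia|]. reflexivity.
    - destruct ((k <? m) && (m <=? 2 * k)) eqn:E; [|reflexivity].
      apply andb_true_iff in E; destruct E as [E _]; apply Nat.ltb_lt in E.
      unfold contrib; replace (visible m (2 * k + 1) 1) with false; auto.
      unfold visible; (destruct (Nat.leb_spec (2 * m) (2 * k + 1 + 1)); [lia|reflexivity]). }
  apply out_true; [lia|]. rewrite !resultant_Ssum, !E.
  destruct (contrib_nz A0 lam (sp (wl w (k + 1))) (k + 1) (2 * k + 1) 1 1 HA (le_n 1) ltac:(lra)).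
  - unfold visible. destruct (Nat.leb_spec (2 * (k + 1)) (2 * k + 1 + 1)), (Nat.leb_spec (2 * k + 1) (2 * (k + 1) + 1)); simpl; auto; lia.
  - left. rewrite Rmult_1_l in H. exact H.
  - right. rewrite Rmult_1_l in H. exact H.
Qed.


Lemma tape_mid (w : list letter) h : (1 <= h <= length w)%nat -> tape_at w h = Let (wl w h).
Proof. intros H. destruct h as [|h]; [lia|]. simpl. unfold wl.
  rewrite (nth_error_nth' w La) by lia. replace (S h - 1)%nat with h by lia. reflexivity. Qed.

Lemma tape_end (w : list letter) : tape_at w (S (length w)) = Dollar.
Proof. simpl. replace (nth_error w (length w)) with (@None letter). reflexivity.
  symmetry. apply nth_error_None. lia. Qed.

Lemma good_mono w k K K' : (K <= K')%nat -> good w k K' -> good w k K.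
Proof. intros H Hg i Hi HK. apply Hg; auto; lia. Qed.

Definition dstate (q : st8) (h : nat) : Prop := q = Ds \/ (h = 0%nat /\ (q = Cs \/ q = Bs)).

Lemma D_phase A0 lam w k : (0 < A0)%R -> length w = (2 * k)%nat ->
  forall d h (c : config M), (h + d = 2 * k + 1)%nat -> dstate (st c) h -> head c = h ->
  dJ c = (2 * k + 1)%nat -> dK c = (1 + h)%nat -> (forall m, srcs c m = srcf w k 0 m) ->
  Inv c -> time c = (6 * k + 4 + 2 * h)%nat -> good w k h ->
  (good w k (2 * k + 2) -> EndsA A0 lam w c (10 * k + 6)) /\
  (~ good w k (2 * k + 2) -> EndsR A0 lam w c (10 * k + 6)).
Proof.
  intros HA Hn. induction d as [|d IH]; intros h c Hd Hq Hh HJ HK Hs HI Ht Hg.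
  -
    assert (Htape : tape_at w (head c) = Dollar).
    { rewrite Hh. replace h with (S (length w)) by lia. apply tape_end. }
    assert (Hmd : forall b, mdelta (st c) (tape_at w (head c)) b = dD Dollar b).
    { intros b. rewrite Htape. destruct Hq as [->|[? _]]; [reflexivity|lia]. }
    destruct (classic (good w k (1 + h))) as [Hg1|Hg1].
    + assert (Ho : det_output A0 lam (length w) (srcs c) (dJ c) (dK c) = false).
      { rewrite Hn, HJ, HK. apply D_out0 with (w := w); auto; lia. }
      assert (Hdl : mdelta (st c) (tape_at w (head c)) (det_output A0 lam (length w) (srcs c) (dJ c) (dK c)) = (Acc, HS, DS, NoAct)).
      { rewrite Hmd, Ho. reflexivity. }
      destruct (step_spec A0 lam w c _ _ _ _ HI Hdl (fun p H => ltac:(discriminate H)))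
        as [c' [Hstep [Hst' [Hh' [HJ' [HK' [Hs' [HI' Ht']]]]]]]].
      assert (Hnh : isacc (st c) || isrej (st c) = false) by (destruct Hq as [->|[_ [->| ->]]]; reflexivity).
      split.
      * intros _. apply (EndsA_step _ _ _ _ _ _ Hnh Hstep).
        apply (EndsA_weak _ _ _ _ (time c')). rewrite Ht', Ht. simpl. lia.
        apply halt_A; auto. rewrite Hn, HJ', HK', HJ, HK. simpl.
        apply D_out0 with (w := w); [intros m; rewrite Hs'; apply Hs|lia|auto].
      * intros Hng. exfalso. apply Hng. replace (2 * k + 2)%nat with (1 + h)%nat by lia. exact Hg1.
    + assert (Ho : det_output A0 lam (length w) (srcs c) (dJ c) (dK c) = true).
      { rewrite Hn, HJ, HK. apply D_out1 with (w := w); auto; try lia. replace (1 + h - 1)%nat with h by lia. exact Hg. }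
      assert (Hdl : mdelta (st c) (tape_at w (head c)) (det_output A0 lam (length w) (srcs c) (dJ c) (dK c)) = (Rej, HS, DS, NoAct)).
      { rewrite Hmd, Ho. reflexivity. }
      destruct (step_spec A0 lam w c _ _ _ _ HI Hdl (fun p H => ltac:(discriminate H)))
        as [c' [Hstep [Hst' [Hh' [HJ' [HK' [Hs' [HI' Ht']]]]]]]].
      assert (Hnh : isacc (st c) || isrej (st c) = false) by (destruct Hq as [->|[_ [->| ->]]]; reflexivity).
      split.
      * intros Hgg. exfalso. apply Hg1. apply (good_mono w k (1 + h) (2 * k + 2)); [lia|exact Hgg].
      * intros _. apply (EndsR_step _ _ _ _ _ _ Hnh Hstep).
        apply (EndsR_weak _ _ _ _ (time c')). rewrite Ht', Ht. simpl. lia.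
        apply halt_R; auto.
  -
    assert (Hmd : forall b, mdelta (st c) (tape_at w (head c)) b = dD (tape_at w h) b).
    { intros b. rewrite Hh. destruct Hq as [->|[-> [-> | ->]]]; reflexivity. }
    assert (Hnd : tape_at w h <> Dollar).
    { destruct h as [|h']. discriminate. rewrite tape_mid by lia. discriminate. }
    assert (Hnh : isacc (st c) || isrej (st c) = false) by (destruct Hq as [->|[_ [->| ->]]]; reflexivity).
    destruct (classic (good w k (1 + h))) as [Hg1|Hg1].
    + assert (Ho : det_output A0 lam (length w) (srcs c) (dJ c) (dK c) = false).
      { rewrite Hn, HJ, HK. apply D_out0 with (w := w); auto; lia. }
      assert (Hdl : mdelta (st c) (tape_at w (head c)) (det_output A0 lam (length w) (srcs c) (dJ c) (dK c)) = (Ds, HR, DU, NoAct)).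
      { rewrite Hmd, Ho. unfold dD. destruct (tape_at w h); [reflexivity|contradiction|reflexivity]. }
      destruct (step_spec A0 lam w c _ _ _ _ HI Hdl (fun p H => ltac:(discriminate H)))
        as [c' [Hstep [Hst' [Hh' [HJ' [HK' [Hs' [HI' Ht']]]]]]]].
      assert (Hc' := IH (S h) c').
      destruct Hc' as [IH1 IH2].
      * lia.
      * rewrite Hst'. left. reflexivity.
      * rewrite Hh', Hh. lia.
      * rewrite HJ'. auto.
      * rewrite HK', HK. lia.
      * intros m. rewrite Hs'. apply Hs.
      * exact HI'.
      * rewrite Ht', Ht. simpl. lia.
      * replace (S h) with (1 + h)%nat by lia. exact Hg1.
      * split; intros Hx; [apply (EndsA_step _ _ _ _ _ _ Hnh Hstep); auto
                          |apply (EndsR_step _ _ _ _ _ _ Hnh Hstep); auto].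
    + assert (Ho : det_output A0 lam (length w) (srcs c) (dJ c) (dK c) = true).
      { rewrite Hn, HJ, HK. apply D_out1 with (w := w); auto; try lia. replace (1 + h - 1)%nat with h by lia. exact Hg. }
      assert (Hdl : mdelta (st c) (tape_at w (head c)) (det_output A0 lam (length w) (srcs c) (dJ c) (dK c)) = (Rej, HS, DS, NoAct)).
      { rewrite Hmd, Ho. reflexivity. }
      destruct (step_spec A0 lam w c _ _ _ _ HI Hdl (fun p H => ltac:(discriminate H)))
        as [c' [Hstep [Hst' [Hh' [HJ' [HK' [Hs' [HI' Ht']]]]]]]].
      split.
      * intros Hgg. exfalso. apply Hg1. apply (good_mono w k (1 + h) (2 * k + 2)); [lia|exact Hgg].
      * intros _. apply (EndsR_step _ _ _ _ _ _ Hnh Hstep).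
        apply (EndsR_weak _ _ _ _ (time c')). rewrite Ht', Ht. simpl. lia.
        apply halt_R; auto.
Qed.

Lemma srcf_self w k h : srcf w k h h = Off.
Proof. apply src_off. lia. Qed.

Lemma srcf_step w k h m : (1 <= h <= 2 * k)%nat ->
  srcf w k (h - 1) m = (if Nat.eqb m h then toggle (if h <=? k then fp (wl w h) else sp (wl w h)) (srcf w k h m) else srcf w k h m).
Proof.
  intros H. destruct (Nat.eqb_spec m h) as [->|Hne].
  - rewrite srcf_self. unfold srcf. destruct (Nat.ltb_spec (h - 1) h); [|lia].
    destruct (Nat.leb_spec h (2 * k)); [|lia]. reflexivity.
  - unfold srcf. destruct (Nat.ltb_spec (h - 1) m), (Nat.ltb_spec h m); simpl; auto; lia.
Qed.

Lemma good0 w k : good w k 0.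
Proof. intros i Hi HK. lia. Qed.

Lemma C_phase A0 lam w k : (0 < A0)%R -> length w = (2 * k)%nat ->
  forall h (c : config M), (h < k)%nat -> st c = Cs -> head c = h ->
  dJ c = (2 * k + 1)%nat -> dK c = 1%nat -> (forall m, srcs c m = srcf w k h m) ->
  Inv c -> time c = (4 * k + 4 + (2 * k - h))%nat ->
  (good w k (2 * k + 2) -> EndsA A0 lam w c (10 * k + 6)) /\
  (~ good w k (2 * k + 2) -> EndsR A0 lam w c (10 * k + 6)).
Proof.
  intros HA Hn. induction h as [|h IH]; intros c Hh Hq Hhd HJ HK Hs HI Ht.
  - apply (D_phase A0 lam w k HA Hn (2 * k + 1) 0 c); auto.
    right. auto. lia. apply good0.
  - assert (Htape : tape_at w (head c) = Let (wl w (S h))).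
    { rewrite Hhd. apply tape_mid. lia. }
    assert (Hdl : mdelta (st c) (tape_at w (head c)) (det_output A0 lam (length w) (srcs c) (dJ c) (dK c)) = (Cs, HL, DS, Toggle (fp (wl w (S h))))).
    { rewrite Hq, Htape. reflexivity. }
    assert (Htog : forall p, Toggle (fp (wl w (S h))) = Toggle p -> srcs c (head c) = Off).
    { intros. rewrite Hs, Hhd. apply srcf_self. }
    destruct (step_spec A0 lam w c _ _ _ _ HI Hdl Htog)
        as [c' [Hstep [Hst' [Hh' [HJ' [HK' [Hs' [HI' Ht']]]]]]]].
    assert (Hnh : isacc (st c) || isrej (st c) = false) by (rewrite Hq; reflexivity).
    assert (Hc' := IH c').
    destruct Hc' as [IH1 IH2].
    + lia.
    + exact Hst'.
    + rewrite Hh', Hhd. reflexivity.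
    + rewrite HJ'. auto.
    + rewrite HK'. auto.
    + intros m. rewrite Hs', Hhd. rewrite Hs.
      assert (E0 := srcf_step w k (S h) m ltac:(lia)). replace (S h - 1)%nat with h in E0 by lia.
      rewrite E0. destruct (S h <=? k) eqn:E; [reflexivity|].
      apply Nat.leb_gt in E. lia.
    + exact HI'.
    + rewrite Ht', Ht. simpl. lia.
    + split; intros Hx; [apply (EndsA_step _ _ _ _ _ _ Hnh Hstep); auto
                        |apply (EndsR_step _ _ _ _ _ _ Hnh Hstep); auto].
Qed.

Lemma B_phase A0 lam w k : (0 < A0)%R -> length w = (2 * k)%nat -> (1 <= k)%nat ->
  forall d (c : config M), (k + d <= 2 * k)%nat -> st c = Bs -> head c = (k + d)%nat ->
  dJ c = (2 * k + 1)%nat -> dK c = 1%nat -> (forall m, srcs c m = srcf w k (k + d) m) ->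
  Inv c -> time c = (4 * k + 4 + (2 * k - (k + d)))%nat ->
  (good w k (2 * k + 2) -> EndsA A0 lam w c (10 * k + 6)) /\
  (~ good w k (2 * k + 2) -> EndsR A0 lam w c (10 * k + 6)).
Proof.
  intros HA Hn Hk. induction d as [|d IH]; intros c Hd Hq Hhd HJ HK Hs HI Ht.
  - rewrite Nat.add_0_r in *.
    assert (Htape : tape_at w (head c) = Let (wl w k)).
    { rewrite Hhd. apply tape_mid. lia. }
    assert (Ho : det_output A0 lam (length w) (srcs c) (dJ c) (dK c) = true).
    { rewrite Hn, HJ, HK. apply B_out1 with (w := w); auto. }
    assert (Hdl : mdelta (st c) (tape_at w (head c)) (det_output A0 lam (length w) (srcs c) (dJ c) (dK c)) = (Cs, HL, DS, Toggle (fp (wl w k)))).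
    { rewrite Hq, Htape, Ho. reflexivity. }
    assert (Htog : forall p, Toggle (fp (wl w k)) = Toggle p -> srcs c (head c) = Off).
    { intros. rewrite Hs, Hhd. apply srcf_self. }
    destruct (step_spec A0 lam w c _ _ _ _ HI Hdl Htog)
        as [c' [Hstep [Hst' [Hh' [HJ' [HK' [Hs' [HI' Ht']]]]]]]].
    assert (Hnh : isacc (st c) || isrej (st c) = false) by (rewrite Hq; reflexivity).
    assert (Hc' := C_phase A0 lam w k HA Hn (k - 1) c').
    destruct Hc' as [IH1 IH2].
    + lia.
    + exact Hst'.
    + rewrite Hh', Hhd. lia.
    + rewrite HJ'. auto.
    + rewrite HK'. auto.
    + intros m. rewrite Hs', Hhd. rewrite Hs.
      assert (E0 := srcf_step w k k m ltac:(lia)). rewrite E0. destruct (k <=? k) eqn:E; [reflexivity|].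
      apply Nat.leb_gt in E. lia.
    + exact HI'.
    + rewrite Ht', Ht. simpl. lia.
    + split; intros Hx; [apply (EndsA_step _ _ _ _ _ _ Hnh Hstep); auto
                        |apply (EndsR_step _ _ _ _ _ _ Hnh Hstep); auto].
  - assert (Htape : tape_at w (head c) = Let (wl w (k + S d))).
    { rewrite Hhd. apply tape_mid. lia. }
    assert (Ho : det_output A0 lam (length w) (srcs c) (dJ c) (dK c) = false).
    { rewrite Hn, HJ, HK. apply B_out0 with (w := w) (h := (k + S d)%nat); auto. lia. }
    assert (Hdl : mdelta (st c) (tape_at w (head c)) (det_output A0 lam (length w) (srcs c) (dJ c) (dK c)) = (Bs, HL, DS, Toggle (sp (wl w (k + S d))))).
    { rewrite Hq, Htape, Ho. reflexivity. }
    assert (Htog : forall p, Toggle (sp (wl w (k + S d))) = Toggle p -> srcs c (head c) = Off).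
    { intros. rewrite Hs, Hhd. apply srcf_self. }
    destruct (step_spec A0 lam w c _ _ _ _ HI Hdl Htog)
        as [c' [Hstep [Hst' [Hh' [HJ' [HK' [Hs' [HI' Ht']]]]]]]].
    assert (Hnh : isacc (st c) || isrej (st c) = false) by (rewrite Hq; reflexivity).
    assert (Hc' := IH c').
    destruct Hc' as [IH1 IH2].
    + lia.
    + exact Hst'.
    + rewrite Hh', Hhd. lia.
    + rewrite HJ'. auto.
    + rewrite HK'. auto.
    + intros m. rewrite Hs', Hhd. rewrite Hs.
      assert (E0 := srcf_step w k (k + S d) m ltac:(lia)). replace (k + S d - 1)%nat with (k + d)%nat in E0 by lia.
      rewrite E0. destruct (k + S d <=? k) eqn:E; [|reflexivity].
      apply Nat.leb_le in E. lia.
    + exact HI'.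
    + rewrite Ht', Ht. simpl. lia.
    + split; intros Hx; [apply (EndsA_step _ _ _ _ _ _ Hnh Hstep); auto
                        |apply (EndsR_step _ _ _ _ _ _ Hnh Hstep); auto].
Qed.

Lemma Lpal_good w k : length w = (2 * k)%nat -> (Lpal w <-> good w k (2 * k + 2)).
Proof.
  intros Hn. split.
  - intros [u Hu] i Hi _. subst w. rewrite length_app, length_rev in Hn.
    assert (Hk : length u = k) by lia. unfold wl.
    rewrite app_nth1 by lia. rewrite app_nth2 by lia. rewrite rev_nth by lia.
    f_equal. lia.
  - intros Hg. exists (firstn k w).
    apply nth_ext with (d := La) (d' := La).
    + rewrite length_app, length_rev, length_firstn. lia.
    + intros j Hj. assert (Hl : length (firstn k w) = k) by (rewrite length_firstn; lia).
      destruct (Nat.lt_ge_cases j k).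
      * rewrite app_nth1 by lia. rewrite nth_firstn. destruct (Nat.ltb_spec j k); [reflexivity|lia].
      * rewrite app_nth2 by lia. rewrite rev_nth by lia. rewrite nth_firstn, Hl.
        destruct (Nat.ltb_spec (k - S (j - k)) k); [|lia].
        assert (E := Hg (2 * k - j)%nat ltac:(lia) ltac:(lia)). unfold wl in E.
        replace (2 * k - j - 1)%nat with (k - S (j - k))%nat in E by lia.
        replace (2 * k + 1 - (2 * k - j) - 1)%nat with j in E by lia. auto.
Qed.

Lemma Lpal_even w : Lpal w -> Nat.even (length w) = true.
Proof. intros [u ->]. rewrite length_app, length_rev. replace (length u + length u)%nat with (2 * length u)%nat by lia.
  apply Nat.even_spec. exists (length u). lia. Qed.

Definition astate (h : nat) : st8 := if Nat.even (h - 1) then Aev else Aod.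

Lemma A_phase A0 lam w : (0 < A0)%R ->
  forall d h (c : config M), (h + d = length w + 1)%nat -> (1 <= h)%nat -> st c = astate h -> head c = h ->
  dJ c = h -> dK c = 0%nat -> (forall m, srcs c m = Off) -> Inv c -> time c = (2 * h)%nat ->
  (Lpal w -> EndsA A0 lam w c (5 * length w + 6)) /\
  (~ Lpal w -> EndsR A0 lam w c (5 * length w + 6)).
Proof.
  intros HA. induction d as [|d IH]; intros h c Hd H1 Hq Hhd HJ HK Hs HI Ht.
  - assert (Htape : tape_at w (head c) = Dollar).
    { rewrite Hhd. replace h with (S (length w)) by lia. apply tape_end. }
    assert (Hnh : isacc (st c) || isrej (st c) = false) by (rewrite Hq; unfold astate; destruct (Nat.even _); reflexivity).
    destruct (Nat.even (length w)) eqn:Ev.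
    + assert (Hq' : st c = Aev). { rewrite Hq. unfold astate. replace (h - 1)%nat with (length w) by lia. rewrite Ev. reflexivity. }
      assert (Hdl : mdelta (st c) (tape_at w (head c)) (det_output A0 lam (length w) (srcs c) (dJ c) (dK c)) = (Bs, HL, DU, NoAct)).
      { rewrite Hq', Htape. reflexivity. }
      destruct (step_spec A0 lam w c _ _ _ _ HI Hdl (fun p H => ltac:(discriminate H)))
        as [c' [Hstep [Hst' [Hh' [HJ' [HK' [Hs' [HI' Ht']]]]]]]].
      apply Nat.even_spec in Ev. destruct Ev as [k Hk].
      assert (Hgl := Lpal_good w k Hk).
      assert (Hmain : (good w k (2 * k + 2) -> EndsA A0 lam w c' (10 * k + 6)) /\
                      (~ good w k (2 * k + 2) -> EndsR A0 lam w c' (10 * k + 6))).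
      { destruct (Nat.eq_dec k 0) as [Hk0|Hk0].
        - subst k. apply (D_phase A0 lam w 0 HA Hk 1 0 c'); auto.
          + rewrite Hst'. right. auto.
          + rewrite Hh', Hhd. lia.
          + rewrite HJ', HJ. lia.
          + rewrite HK', HK. lia.
          + intros m. rewrite Hs', Hs. symmetry. apply src_off. lia.
          + rewrite Ht', Ht. simpl. lia.
          + apply good0.
        - assert (Hb := B_phase A0 lam w k HA Hk ltac:(lia) k c').
          destruct Hb as [B1 B2]; auto.
          + lia.
          + rewrite Hh', Hhd. lia.
          + rewrite HJ', HJ. lia.
          + rewrite HK', HK. lia.
          + intros m. rewrite Hs', Hs. symmetry. apply src_off. lia.
          + rewrite Ht', Ht. simpl. lia. }
      destruct Hmain as [Hm1 Hm2]. split.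
      * intros Hp. apply (EndsA_step _ _ _ _ _ _ Hnh Hstep).
        apply (EndsA_weak _ _ _ _ (10 * k + 6)). lia. apply Hm1. apply Hgl. exact Hp.
      * intros Hp. apply (EndsR_step _ _ _ _ _ _ Hnh Hstep).
        apply (EndsR_weak _ _ _ _ (10 * k + 6)). lia. apply Hm2. rewrite <- Hgl. exact Hp.
    + assert (Hq' : st c = Aod). { rewrite Hq. unfold astate. replace (h - 1)%nat with (length w) by lia. rewrite Ev. reflexivity. }
      assert (Hdl : mdelta (st c) (tape_at w (head c)) (det_output A0 lam (length w) (srcs c) (dJ c) (dK c)) = (Rej, HS, DS, NoAct)).
      { rewrite Hq', Htape. reflexivity. }
      destruct (step_spec A0 lam w c _ _ _ _ HI Hdl (fun p H => ltac:(discriminate H)))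
        as [c' [Hstep [Hst' [Hh' [HJ' [HK' [Hs' [HI' Ht']]]]]]]].
      split.
      * intros Hp. apply Lpal_even in Hp. congruence.
      * intros _. apply (EndsR_step _ _ _ _ _ _ Hnh Hstep).
        apply (EndsR_weak _ _ _ _ (time c')). rewrite Ht', Ht. simpl. lia.
        apply halt_R; auto.
  - assert (Htape : tape_at w (head c) = Let (wl w h)).
    { rewrite Hhd. apply tape_mid. lia. }
    assert (Hnh : isacc (st c) || isrej (st c) = false) by (rewrite Hq; unfold astate; destruct (Nat.even _); reflexivity).
    assert (Hdl : mdelta (st c) (tape_at w (head c)) (det_output A0 lam (length w) (srcs c) (dJ c) (dK c)) = (astate (S h), HR, DR, NoAct)).
    { rewrite Hq, Htape. unfold astate. replace (S h - 1)%nat with (S (h - 1)) by lia.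
      rewrite Nat.even_succ, <- Nat.negb_even. destruct (Nat.even (h - 1)); reflexivity. }
    destruct (step_spec A0 lam w c _ _ _ _ HI Hdl (fun p H => ltac:(discriminate H)))
        as [c' [Hstep [Hst' [Hh' [HJ' [HK' [Hs' [HI' Ht']]]]]]]].
    assert (Hc' := IH (S h) c').
    destruct Hc' as [IH1 IH2].
    + lia.
    + lia.
    + exact Hst'.
    + rewrite Hh', Hhd. lia.
    + rewrite HJ', HJ. lia.
    + rewrite HK', HK. reflexivity.
    + intros m. rewrite Hs'. apply Hs.
    + exact HI'.
    + rewrite Ht', Ht. simpl. lia.
    + split; intros Hx; [apply (EndsA_step _ _ _ _ _ _ Hnh Hstep); auto
                        |apply (EndsR_step _ _ _ _ _ _ Hnh Hstep); auto].
Qed.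

Lemma all_w A0 lam w : (0 < A0)%R ->
  (Lpal w -> EndsA A0 lam w (init_config M w) (5 * length w + 6)) /\
  (~ Lpal w -> EndsR A0 lam w (init_config M w) (5 * length w + 6)).
Proof.
  intros HA. set (c := init_config M w).
  assert (HI : Inv c). { intros m. simpl. split; auto. }
  assert (Hdl : mdelta (st c) (tape_at w (head c)) (det_output A0 lam (length w) (srcs c) (dJ c) (dK c)) = (Aev, HR, DR, NoAct)).
  { reflexivity. }
  destruct (step_spec A0 lam w c _ _ _ _ HI Hdl (fun p H => ltac:(discriminate H)))
        as [c' [Hstep [Hst' [Hh' [HJ' [HK' [Hs' [HI' Ht']]]]]]]].
  assert (Hnh : isacc (st c) || isrej (st c) = false) by reflexivity.
  assert (Hc' := A_phase A0 lam w HA (length w) 1 c').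
  destruct Hc' as [IH1 IH2].
  + lia.
  + lia.
  + exact Hst'.
  + rewrite Hh'. simpl. lia.
  + rewrite HJ'. simpl. lia.
  + rewrite HK'. simpl. lia.
  + intros m. rewrite Hs'. reflexivity.
  + exact HI'.
  + rewrite Ht'. reflexivity.
  + split; intros Hx; [apply (EndsA_step _ _ _ _ _ _ Hnh Hstep); auto
                      |apply (EndsR_step _ _ _ _ _ _ Hnh Hstep); auto].
Qed.

Theorem theorem2 (lam r A0 : R) :
  algebraic r -> (0 < r)%R -> lam = (r * PI)%R -> (0 < A0)%R ->
  exists M : OIA, decides M A0 lam Lpal /\ linear_time M A0 lam.
Proof.
  intros _ _ _ HA. exists M. split.
  - intros w. destruct (all_w A0 lam w HA) as [H1 H2]. split.
    + intros Hp. destruct (H1 Hp) as [[f [t Hf]] _]. exists f, t. exact Hf.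
    + intros Hp. destruct (H2 Hp) as [[f [t Hf]] _]. exists f, t. exact Hf.
  - exists 5%nat, 6%nat. intros w fuel t Ht.
    destruct (all_w A0 lam w HA) as [H1 H2].
    destruct (classic (Lpal w)) as [Hp|Hp].
    + destruct (H1 Hp) as [_ Hb]. apply (Hb fuel t Ht).
    + destruct (H2 Hp) as [_ Hb]. apply (Hb fuel t Ht).
Qed.
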